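(* Let $d\ge 2$, let $P_1,\dots,P_d$ be matrix polynomials with $P_i(x_1,\dots,x_d)=\sum_{i_1=0}^{\tau_1}\cdots\sum_{i_d=0}^{\tau_d}P^{(i)}_{i_1,\dots,i_d}x_1^{i_1}\cdots x_d^{i_d}$, $P^{(i)}_{i_1,\dots,i_d}\in\mathbb{C}^{n_i\times n_i}$, and let $N=\prod_{i=1}^d n_i$. Suppose $(x_1^*,\dots,x_d^* )\in\mathbb{C}^d$ and nonzero $\mathbf{v}_i\in\mathbb{C}^{n_i}$ satisfy $P_i(x_1^*,\dots,x_d^* )\mathbf{v}_i=0$ for all $1\le i\le d$, and set $\mathbf{v}=\mathbf{v}_1\otimes\cdots\otimes\mathbf{v}_d$. Let $V$ be the block vector whose block indexed by $\mathbf{i}=(i_1,\dots,i_{d-1})$, $0\le i_k\le\alpha_k$ (ordered as the block columns of $R$), is $\prod_{k=1}^{d-1}(x_k^* )^{i_k}\mathbf{v}$. Then $V\neq 0$ and $R(x_d^* )V=0$, where $R(x_d)$ is the hidden variable tensor Dixon resultant; i.e. $x_d^*$ is an eigenvalue of $R(x_d)$ with eigenvector $V$.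
   Context: Kronecker block determinant: for a $d\times d$ array $M=(M_{ij})$ with $M_{ij}\in\mathbb{C}^{n_i\times n_i}$ (possibly depending polynomially on variables), $|M|_\otimes=\sum_{\sigma\in S_d}\mathrm{sgn}(\sigma)\,M_{1,\sigma(1)}\otimes\cdots\otimes M_{d,\sigma(d)}$, an $N\times N$ matrix. Tensor Dixon function (with $x_d$ hidden): with variables $s_1,\dots,s_{d-1},t_1,\dots,t_{d-1},x_d$, let $M_{ij}=P_i(t_1,\dots,t_{j-1},s_j,\dots,s_{d-1},x_d)$ for $1\le i,j\le d$, and $f_{\text{Dixon}}=|M|_\otimes/\prod_{i=1}^{d-1}(s_i-t_i)$, a matrix polynomial of degree at most $\alpha_i=i\tau_i-1$ in $s_i$ and at most $\beta_i=(d-i)\tau_i-1$ in $t_i$. Expand $f_{\text{Dixon}}=\sum_{\mathbf{i},\mathbf{j}}A_{\mathbf{i},\mathbf{j}}(x_d)\prod_k s_k^{i_k}\prod_k t_k^{j_k}$ over $0\le i_k\le\alpha_k$, $0\le j_k\le\beta_k$, with $A_{\mathbf{i},\mathbf{j}}(x_d)$ an $N\times N$ matrix polynomial in $x_d$. The hidden variable tensor Dixon resultant $R(x_d)$ is the square block matrix whose block columns (width $N$) are indexed by the $s$-exponents $\mathbf{i}$ and block rows (height $N$) by the $t$-exponents $\mathbf{j}$ (in fixed orderings), with block $(\mathbf{j},\mathbf{i})$ equal to $A_{\mathbf{i},\mathbf{j}}(x_d)$. *)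

(* Defs.v *)
From HB Require Import structures.
From mathcomp Require Import all_boot all_order all_algebra all_fingroup.
From mathcomp.real_closed Require Import complex.
From mathcomp Require Import reals.

Set Implicit Arguments.
Unset Strict Implicit.
Unset Printing Implicit Defensive.

Import Order.TTheory GRing.Theory Num.Theory.
Local Open Scope ring_scope.

Section TensorDixon.

Variable R : realType.
Local Notation C := (R[i])%C.

(* Entry (p,q) of a matrix, with natural-number indices (0 outside range). *)
Definition mxe {m n : nat} (A : 'M[C]_(m, n)) (p q : nat) : C :=
  match (insub p : option 'I_m), (insub q : option 'I_n) with
  | Some p', Some q' => A p' q'
  | _, _ => 0
  end.

Variable d : nat.

(* Mixed-radix digit i of the index a of a Kronecker product whose i-th
   factor has size sz i (factor 0 is the most significant one): the standard
   Kronecker (row-major) ordering. *)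
Definition kdigit (sz : 'I_d -> nat) (i : 'I_d) (a : nat) : nat :=
  (a %/ \prod_(k < d | (i < k)%N) sz k) %% sz i.

Definition kronmx (n : 'I_d -> nat) (A : forall i : 'I_d, 'M[C]_(n i)) :
    'M[C]_(\prod_(i < d) n i) :=
  \matrix_(a, b) \prod_(i < d) mxe (A i) (kdigit n i a) (kdigit n i b).

Definition kroncv (n : 'I_d -> nat) (v : forall i : 'I_d, 'cV[C]_(n i)) :
    'cV[C]_(\prod_(i < d) n i) :=
  \col_a \prod_(i < d) mxe (v i) (kdigit n i a) 0.

Definition kdet (n : 'I_d -> nat) (M : forall i j : 'I_d, 'M[C]_(n i)) :
    'M[C]_(\prod_(i < d) n i) :=
  \sum_(s : 'S_d) (-1) ^+ s *: kronmx (fun i => M i (s i)).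

Definition expbox (tau : nat -> nat) := {dffun forall k : 'I_d, 'I_(tau k).+1}.

Definition peval (tau : nat -> nat) (m : nat) (Pc : expbox tau -> 'M[C]_m)
    (x : 'I_d -> C) : 'M[C]_m :=
  \sum_(e : expbox tau) (\prod_(k < d) x k ^+ e k) *: Pc e.

(* The evaluation point of the entry in block column j of the Dixon array
   (0-indexed): variables k < j get t_k, variables j <= k < d-1 get s_k,
   variable d-1 gets the hidden variable xd.  (Coordinate d-1 of s,t unused.) *)
Definition dixpoint (s t : 'I_d -> C) (xd : C) (j : 'I_d) : 'I_d -> C :=
  fun k => if (k : nat) == d.-1 then xd else if (k < j)%N then t k else s k.

(* Block index sets: s-exponents i_k in [0, alpha_k] with alpha_k + 1 = (k+1) tau_k,
   t-exponents j_k in [0, beta_k] with beta_k + 1 = (d-1-k) tau_k, k < d-1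
   (0-indexed version of alpha_k = k tau_k - 1, beta_k = (d-k) tau_k - 1). *)
Definition sexps (tau : nat -> nat) := {dffun forall k : 'I_d.-1, 'I_(k.+1 * tau k)}.
Definition texps (tau : nat -> nat) := {dffun forall k : 'I_d.-1, 'I_((d.-1 - k) * tau k)}.

Definition widd (k : 'I_d.-1) : 'I_d := widen_ord (leq_pred d) k.

Definition stmono (tau : nat -> nat) (s t : 'I_d -> C) (i : sexps tau) (j : texps tau) : C :=
  \prod_(k < d.-1) (s (widd k) ^+ i k * t (widd k) ^+ j k).

(* A is the coefficient family of the tensor Dixon function:
   f_Dixon = |M|_(x) / prod_k (s_k - t_k) = sum_{i,j} A i j (x_d) s^i t^j,
   i.e.  prod_k (s_k - t_k) * sum_{i,j} A i j xd s^i t^j = |M|_(x)  identically. *)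
Definition dixon_coeffs (n : 'I_d -> nat) (tau : nat -> nat)
    (Pc : forall i : 'I_d, expbox tau -> 'M[C]_(n i))
    (A : sexps tau -> texps tau -> C -> 'M[C]_(\prod_(i < d) n i)) : Prop :=
  forall (s t : 'I_d -> C) (xd : C),
    (\prod_(k < d.-1) (s (widd k) - t (widd k))) *:
      (\sum_(i : sexps tau) \sum_(j : texps tau) stmono s t i j *: A i j xd)
    = kdet (fun i j => peval (Pc i) (dixpoint s t xd j)).

(* Hidden variable tensor Dixon resultant R(xd): block (j, i) = A i j xd,
   block rows indexed by t-exponents, block columns by s-exponents
   (both in the enumeration order of the finite index types). *)
Definition dixon_resultant (n : 'I_d -> nat) (tau : nat -> nat)
    (A : sexps tau -> texps tau -> C -> 'M[C]_(\prod_(i < d) n i)) (xd : C) :=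
  \mxblock_(jj < #|texps tau|, ii < #|sexps tau|)
     A (enum_val ii) (enum_val jj) xd.

Definition lastc (x : 'I_d -> C) : C :=
  (match d as m return ('I_m -> C) -> C with
   | 0 => fun _ => 0
   | m.+1 => fun f => f ord_max
   end) x.

Definition dixon_vector (n : 'I_d -> nat) (tau : nat -> nat) (x : 'I_d -> C)
    (v : 'cV[C]_(\prod_(i < d) n i)) :=
  \mxcol_(ii < #|sexps tau|)
     ((\prod_(k < d.-1) x (widd k) ^+ (enum_val ii k)) *: v).

End TensorDixon.

(* Main.v *)
Require Import Defs.
From HB Require Import structures.
From mathcomp Require Import all_boot all_order all_algebra all_fingroup.
From mathcomp.real_closed Require Import complex.
From mathcomp Require Import reals.
From mathcomp Require Import zify.
Import Order.TTheory GRing.Theory Num.Theory.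

Set Implicit Arguments.
Unset Strict Implicit.
Unset Printing Implicit Defensive.

Section Radix.
Variable (m : nat -> nat) (D : nat).
Hypothesis mpos : forall k, 0 < m k.
Definition Qp j := \prod_(j <= k < D) m k.

Lemma Qp_gt0 j : 0 < Qp j.
Proof. exact: prodn_gt0. Qed.

Lemma QpS j : j < D -> Qp j = m j * Qp j.+1.
Proof. by move=> h; rewrite /Qp big_ltn. Qed.

Lemma QpD : Qp D = 1.
Proof. by rewrite /Qp big_geq. Qed.

Lemma modnM_split a p q : 0 < p -> 0 < q ->
  a %% (p * q) = (a %/ q %% p) * q + a %% q.
Proof.
move=> p0 q0.
have e : a = (a %/ q %/ p) * (p * q) + ((a %/ q %% p) * q + a %% q).
  rewrite {1}(divn_eq a q) {1}(divn_eq (a %/ q) p); lia.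
rewrite {1}e modnMDl modn_small //.
have h1 : a %% q < q by rewrite ltn_mod.
have h2 : a %/ q %% p < p by rewrite ltn_mod.
nia.
Qed.

Lemma recon_gen a k : k <= D ->
  a %% Qp (D - k) = \sum_(D - k <= i < D) (a %/ Qp i.+1 %% m i) * Qp i.+1.
Proof.
elim: k => [|k IH] hk.
  by rewrite subn0 QpD modn1 big_geq.
have hj : D - k.+1 < D by lia.
have e : (D - k.+1).+1 = D - k by lia.
rewrite big_ltn // QpS // e -IH; last by lia.
by rewrite modnM_split ?Qp_gt0.
Qed.

Lemma recon a : a < Qp 0 -> a = \sum_(0 <= i < D) (a %/ Qp i.+1 %% m i) * Qp i.+1.
Proof.
move=> h; have := recon_gen a (leqnn D); rewrite subnn modn_small //.
Qed.

Lemma rest_lt_gen (f : nat -> nat) k : (forall i, i < D -> f i < m i) -> k <= D ->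
  \sum_(D - k <= i < D) f i * Qp i.+1 < Qp (D - k).
Proof.
move=> hf; elim: k => [|k IH] hk.
  by rewrite subn0 big_geq // QpD.
have hj : D - k.+1 < D by lia.
have e : (D - k.+1).+1 = D - k by lia.
rewrite big_ltn // e (QpS hj) e.
have := IH (ltnW hk); have := hf _ hj; nia.
Qed.

Lemma rest_lt (f : nat -> nat) j : (forall i, i < D -> f i < m i) -> j <= D ->
  \sum_(j <= i < D) f i * Qp i.+1 < Qp j.
Proof.
move=> hf hj; have e : j = D - (D - j) by lia.
rewrite e; apply: rest_lt_gen => //; lia.
Qed.

Lemma Qp_split l i : l <= i -> i <= D -> Qp l = (\prod_(l <= k < i) m k) * Qp i.
Proof. by move=> h1 h2; rewrite /Qp (@big_cat_nat _ _ _ i). Qed.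

Lemma digit (f : nat -> nat) i : (forall i, i < D -> f i < m i) -> i < D ->
  (\sum_(0 <= l < D) f l * Qp l.+1) %/ Qp i.+1 %% m i = f i.
Proof.
move=> hf hi.
rewrite (@big_cat_nat _ _ _ i.+1) // big_nat_recr //=.
set c := \sum_(0 <= l < i) f l * \prod_(l.+1 <= k < i) m k.
have ec : \sum_(0 <= i0 < i) f i0 * Qp i0.+1 = (c * m i) * Qp i.+1.
  rewrite /c big_distrl big_distrl /=; apply: eq_big_nat => l hl.
  rewrite (Qp_split (l := l.+1) (i := i.+1)); [|lia|lia].
  rewrite big_nat_recr /=; last by lia.
  by rewrite !mulnA.
rewrite ec -mulnDl.
rewrite divnMDl ?Qp_gt0 // divn_small ?addn0; last first.
  by apply: rest_lt => //.
by rewrite modnMDl modn_small // hf.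
Qed.

End Radix.

Lemma digit_ord (m : nat -> nat) (D : nat) (mpos : forall k, 0 < m k)
  (h : 'I_D -> nat) (k : 'I_D) : (forall k, h k < m k) ->
  (\sum_(l < D) h l * Qp m D l.+1) %/ Qp m D k.+1 %% m k = h k.
Proof.
move=> hh.
pose F l := if (insub l : option 'I_D) is Some k then h k else 0.
have FE (k' : 'I_D) : F k' = h k'.
  rewrite /F; case: insubP => [k'' _ e|]; last by rewrite ltn_ord.
  by rewrite (val_inj e).
have -> : \sum_(l < D) h l * Qp m D l.+1 = \sum_(0 <= l < D) F l * Qp m D l.+1.
  by rewrite big_mkord; apply: eq_bigr => l _; rewrite FE.
rewrite (digit mpos) ?FE // => i hi.
by have := FE (Ordinal hi) => /= ->.
Qed.

Local Open Scope ring_scope.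

Section Kron.
Variable R : realType.
Local Notation C := (R[i])%C.
Variable d : nat.
Variable n : 'I_d -> nat.
Hypothesis npos : forall i, (0 < n i)%N.

Definition mm (j : nat) : nat := if (insub j : option 'I_d) is Some k then n k else 1%N.
Lemma mm_pos k : (0 < mm k)%N.
Proof. by rewrite /mm; case: insubP. Qed.
Lemma mm_ord (k : 'I_d) : mm k = n k.
Proof.
rewrite /mm; case: insubP => [k' _ hk|]; last by rewrite ltn_ord.
by rewrite (val_inj hk).
Qed.
Local Notation QQ := (Qp mm d).

Lemma prod_condE (i : 'I_d) : \prod_(k < d | (i < k)%N) n k = QQ i.+1.
Proof.
rewrite /Qp big_geq_mkord; apply: eq_big => [k|k _] //; by rewrite mm_ord.
Qed.
Lemma NE : \prod_(i < d) n i = QQ 0.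
Proof.
rewrite /Qp big_geq_mkord; apply: eq_big => [k|k _] //; by rewrite mm_ord.
Qed.
Lemma kdigitE (i : 'I_d) a : kdigit n i a = (a %/ QQ i.+1 %% mm i)%N.
Proof. by rewrite /kdigit prod_condE mm_ord. Qed.

Local Notation N := (\prod_(i < d) n i)%N.
Lemma N_gt0 : (0 < N)%N.
Proof. exact: prodn_gt0. Qed.
Lemma n_le_N (i : 'I_d) : (n i <= N)%N.
Proof.
rewrite (bigD1 i) //=; apply: leq_pmulr; exact: prodn_gt0.
Qed.
Lemma kdigit_lt (i : 'I_d) a : (kdigit n i a < n i)%N.
Proof. by rewrite /kdigit ltn_mod. Qed.

Definition b0 : 'I_N := Ordinal N_gt0.
Definition dig (b : 'I_N) : {ffun 'I_d -> 'I_N} := [ffun i => insubd b0 (kdigit n i b)].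
Definition enc (f : {ffun 'I_d -> 'I_N}) : 'I_N :=
  insubd b0 (\sum_(l < d) val (f l) * QQ l.+1)%N.
Definition famQ := (fun (i : 'I_d) (q : 'I_N) => (q < n i)%N).

Lemma dig_val b i : val (dig b i) = kdigit n i b.
Proof.
rewrite ffunE val_insubd; case: ifP => // /negP[].
exact: leq_trans (kdigit_lt i b) (n_le_N i).
Qed.

Lemma encK b : enc (dig b) = b.
Proof.
apply: val_inj; rewrite /enc val_insubd.
have -> : (\sum_(l < d) val (dig b l) * QQ l.+1)%N =
          (\sum_(0 <= l < d) (b %/ QQ l.+1 %% mm l) * QQ l.+1)%N.
  by rewrite big_mkord; apply: eq_bigr => l _; rewrite dig_val kdigitE.
have hb : (b < QQ 0)%N by rewrite -NE ltn_ord.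
by rewrite -(recon mm_pos hb) ltn_ord.
Qed.

Definition Fnat (f : {ffun 'I_d -> 'I_N}) (l : nat) : nat :=
  if (insub l : option 'I_d) is Some k then val (f k) else 0%N.

Lemma Fnat_ord (f : {ffun 'I_d -> 'I_N}) (k : 'I_d) : Fnat f k = f k.
Proof.
rewrite /Fnat; case: insubP => [k' _ hk|]; last by rewrite ltn_ord.
by rewrite (val_inj hk).
Qed.

Lemma enc_sumE (f : {ffun 'I_d -> 'I_N}) : (\sum_(l < d) val (f l) * QQ l.+1)%N = (\sum_(0 <= l < d) Fnat f l * QQ l.+1)%N.
Proof. by rewrite big_mkord; apply: eq_bigr => l _; rewrite Fnat_ord. Qed.

Lemma Fnat_lt (f : {ffun 'I_d -> 'I_N}) : f \in family famQ -> forall i, (i < d)%N -> (Fnat f i < mm i)%N.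
Proof.
move=> /familyP hf i hi; have := Fnat_ord f (Ordinal hi); have := mm_ord (Ordinal hi).
move=> /= -> ->; exact: hf.
Qed.

Lemma kdigit_enc (f : {ffun 'I_d -> 'I_N}) (i : 'I_d) : f \in family famQ -> kdigit n i (enc f) = f i.
Proof.
move=> hf; rewrite /enc val_insubd enc_sumE.
have hlt : (\sum_(0 <= l < d) Fnat f l * QQ l.+1 < N)%N.
  rewrite NE; apply: rest_lt => //; exact: Fnat_lt.
rewrite hlt kdigitE (digit mm_pos) ?Fnat_ord //; exact: Fnat_lt.
Qed.

Lemma dig_enc (f : {ffun 'I_d -> 'I_N}) : (dig (enc f) == f) = (f \in family famQ).
Proof.
apply/eqP/idP => [<-|hf].
  by apply/familyP => i; rewrite /famQ -topredE /= dig_val kdigit_lt.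
apply/ffunP => i; apply: val_inj; rewrite dig_val kdigit_enc //.
Qed.

Lemma sum_digits (G : 'I_d -> nat -> C) :
  \sum_(b < N) \prod_(i < d) G i (kdigit n i b) = \prod_(i < d) \sum_(q < n i) G i q.
Proof.
transitivity (\prod_(i < d) \sum_(q < N | famQ i q) G i q); last first.
  by apply: eq_bigr => i _; rewrite (big_ord_widen N (G i) (n_le_N i)).
rewrite bigA_distr_big_dep (reindex_onto enc dig) /=; last by move=> b _; exact: encK.
apply: eq_big => f; first by rewrite dig_enc.
by rewrite dig_enc => hf; apply: eq_bigr => i _; rewrite kdigit_enc.
Qed.

End Kron.

Section K2.
Variable R : realType.
Local Notation C := (R[i])%C.

Lemma insub_ord m (k : 'I_m) : (insub (val k) : option 'I_m) = Some k.
Proof. by case: insubP => [k' _ e|]; [rewrite (val_inj e) | rewrite ltn_ord]. Qed.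

Lemma mxeE m k (A : 'M[C]_(m, k)) (p : 'I_m) (q : 'I_k) : mxe A p q = A p q.
Proof. by rewrite /mxe !insub_ord. Qed.

Lemma mxe0 m k p q : mxe (0 : 'M[C]_(m, k)) p q = 0.
Proof. by rewrite /mxe; case: (insub p : option 'I_m) => [a|]; case: (insub q : option 'I_k) => [b|] //; rewrite mxE. Qed.

Lemma mxe_mul m k l (A : 'M[C]_(m, k)) (B : 'M[C]_(k, l)) p q :
  (p < m)%N -> (q < l)%N -> mxe (A *m B) p q = \sum_(r < k) mxe A p r * mxe B r q.
Proof.
move=> hp hq.
have -> : p = Ordinal hp by []. have -> : q = Ordinal hq by [].
rewrite mxeE mxE; apply: eq_bigr => r _; by rewrite !mxeE.
Qed.

Lemma mx_nz m k (A : 'M[C]_(m, k)) : A != 0 -> exists i j, A i j != 0.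
Proof.
move=> hA; case: (pickP (fun ij : 'I_m * 'I_k => A ij.1 ij.2 != 0)) => [[i j] h|h].
  by exists i, j.
case/negP: hA; apply/eqP/matrixP => i j; rewrite mxE.
by have /negbFE/eqP := h (i, j).
Qed.

Variable d : nat.
Variable n : 'I_d -> nat.
Hypothesis npos : forall i, (0 < n i)%N.

Lemma kron_mul (B : forall i, 'M[C]_(n i)) (v : forall i, 'cV[C]_(n i)) :
  kronmx B *m kroncv v = kroncv (fun i => B i *m v i).
Proof.
apply/matrixP => a j; rewrite !mxE.
under eq_bigr do rewrite !mxE -big_split /=.
rewrite (sum_digits npos (fun i q => mxe (B i) (kdigit n i a) q * mxe (v i) q 0)).
apply: eq_bigr => i _; rewrite mxe_mul ?kdigit_lt //.
Qed.

Lemma kroncv0 (w : forall i, 'cV[C]_(n i)) (i0 : 'I_d) : w i0 = 0 -> kroncv w = 0.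
Proof.
move=> h; apply/matrixP => a j; by rewrite !mxE (bigD1 i0) //= h mxe0 mul0r.
Qed.

End K2.

Section K3.
Variable R : realType.
Local Notation C := (R[i])%C.

Lemma npos_of m (v : 'cV[C]_m) : v != 0 -> (0 < m)%N.
Proof. by case/mx_nz => i [j _]; exact: leq_ltn_trans (leq0n i) (ltn_ord i). Qed.

Variable d : nat.
Variable n : 'I_d -> nat.

Lemma kroncv_nz (v : forall i, 'cV[C]_(n i)) : (forall i, v i != 0) -> kroncv v != 0.
Proof.
move=> hv; have npos i := npos_of (hv i).
pose pv i : nat := if [pick p : 'I_(n i) | v i p 0 != 0] is Some p then val p else 0%N.
have hpv i : (pv i < n i)%N && (mxe (v i) (pv i) 0 != 0).
  rewrite /pv; case: pickP => [p hp | hn].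
    by rewrite ltn_ord /=; have := mxeE (v i) p ord0 => /= ->.
  have [p [j hj]] := mx_nz (hv i); move: hj; rewrite (ord1 j).
  by have := hn p => /= ->.
pose f : {ffun 'I_d -> 'I_(\prod_(i < d) n i)} := [ffun i => insubd (b0 npos) (pv i)].
have fv i : val (f i) = pv i.
  rewrite ffunE val_insubd; case/andP: (hpv i) => h _.
  by rewrite (leq_trans h (n_le_N npos i)).
have ff : f \in family (@famQ d n).
  by apply/familyP => i; rewrite /famQ -topredE /= fv; case/andP: (hpv i).
apply/negP => /eqP h0.
have := congr1 (fun M : 'cV[C]_(\prod_(i < d) n i) => M (enc npos f) ord0) h0; rewrite !mxE => /eqP.
apply/negP/prodf_neq0 => i _.
by rewrite (kdigit_enc npos) // fv; case/andP: (hpv i).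
Qed.

Lemma poly_vanish (J : finType) (c : J -> C) (e : J -> nat) (g : {poly C}) :
  g != 0 -> injective e ->
  (forall y, g.[y] != 0 -> \sum_j c j * y ^+ e j = 0) -> forall j, c j = 0.
Proof.
move=> g0 einj hy j0.
pose p := \sum_j c j *: 'X^(e j).
have pE y : p.[y] = \sum_j c j * y ^+ e j.
  by rewrite /p horner_sum; apply: eq_bigr => j _; rewrite hornerZ hornerXn.
have q0 : g * p = 0.
  apply: (@roots_geq_poly_eq0 _ _ [seq i%:R | i <- iota 0 (size (g * p))]).
  - apply/allP => y _; rewrite /root hornerM.
    have [->|gy] := eqVneq g.[y] 0; first by rewrite mul0r.
    by rewrite pE hy // mulr0.
  - rewrite map_inj_uniq ?iota_uniq // => a b /eqP; by rewrite eqr_nat => /eqP.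
  - by rewrite size_map size_iota.
have p0 : p = 0 by move/eqP: q0; rewrite mulf_eq0 (negPf g0) /= => /eqP.
have := congr1 (fun q : {poly C} => q`_(e j0)) p0.
rewrite coef0 /p coef_sumMXn => <-.
rewrite (big_pred1 j0) // => j /=; apply/eqP/eqP => [/eqP|->//].
by rewrite eq_sym => /eqP /einj.
Qed.

End K3.

Unset Implicit Arguments.
Set Strict Implicit.
Set Printing Implicit Defensive.

Lemma lastcE (R : realType) d (x : 'I_d -> R[i]%C) (k : 'I_d) :
  (k : nat) = d.-1 -> lastc x = x k.
Proof.
case: d x k => [|d'] x k; first by case: k.
move=> hk; rewrite /lastc /=; congr (x _); apply: val_inj => /=; by rewrite hk.
Qed.

Lemma peval_ext (R : realType) d tau m (Pc : expbox d tau -> 'M[R[i]%C]_m) f g :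
  f =1 g -> peval Pc f = peval Pc g.
Proof.
move=> h; rewrite /peval; apply: eq_bigr => e _; congr (_ *: _).
by apply: eq_bigr => k _; rewrite h.
Qed.

Lemma sum_enum (T : finType) (V : nmodType) (F : T -> V) :
  \sum_(ii < #|T|) F (enum_val ii) = \sum_(i : T) F i.
Proof. rewrite -(big_enum_val (A := T)). by apply: eq_bigl => i; rewrite inE. Qed.

Theorem proposition4p2 (R : realType) (d : nat) (hd : (2 <= d)%N)
    (n : 'I_d -> nat) (tau : nat -> nat)
    (htau : forall k : 'I_d.-1, (0 < tau k)%N)
    (Pc : forall i : 'I_d, expbox d tau -> 'M[R[i]%C]_(n i))
    (x : 'I_d -> R[i]%C) (v : forall i : 'I_d, 'cV[R[i]%C]_(n i))
    (A : sexps d tau -> texps d tau -> R[i]%C -> 'M[R[i]%C]_(\prod_(i < d) n i)) :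
  (forall i : 'I_d, v i != 0) ->
  (forall i : 'I_d, peval (Pc i) x *m v i = 0) ->
  dixon_coeffs Pc A ->
  let V := dixon_vector tau x (kroncv v) in
  V != 0 /\ dixon_resultant A (lastc x) *m V = 0.
Proof.
move=> hv hP hA V.
have npos i := npos_of (hv i).
have d0 : (0 < d)%N by lia.
pose j0 : 'I_d := Ordinal d0.
split.
  have zpos (k : 'I_d.-1) : (0 < k.+1 * tau k)%N by rewrite muln_gt0 htau.
  pose z : sexps d tau := [ffun k => Ordinal (zpos k)].
  apply/negP => /eqP V0.
  have := congr1 (fun M => submxcol M (enum_rank z)) V0.
  rewrite mxcolK submxcol0 enum_rankK.
  have -> : \prod_(k < d.-1) x (widd k) ^+ z k = 1 by apply: big1 => k _; rewrite ffunE expr0.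
  rewrite scale1r.
  by move/eqP; apply/negP; exact: kroncv_nz.
set xd := lastc x.
set kv := kroncv v.
pose W (j : texps d tau) := \sum_(i : sexps d tau) A i j xd *m ((\prod_(k < d.-1) x (widd k) ^+ i k) *: kv).
suff main : forall j, W j = 0.
  rewrite /V /dixon_resultant /dixon_vector mul_mxblock_mxrow.
  transitivity (\mxcol_(jj < #|texps d tau|) (0 : 'M[R[i]%C]_(\prod_(i0 < d) n i0, 1))); last exact: mxcol0.
  apply/eq_mxcolP => jj.
  transitivity (W (enum_val jj)); last exact: main.
  exact: (@sum_enum (sexps d tau)).
pose B := (\sum_(k < d.-1) (d.-1 - k) * tau k)%N.
have jB (j : texps d tau) (k : 'I_d.-1) : (val (j k) < B)%N.
  apply: (leq_trans (ltn_ord (j k))); rewrite /B (bigD1 k) //=; exact: leq_addr.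
have hD : (0 < d.-1)%N by lia.
have Bpos : (0 < B)%N.
  have ht := htau (Ordinal hD); rewrite /= in ht.
  rewrite /B (bigD1 (Ordinal hD)) //= subn0 addn_gt0 muln_gt0 hD ht //.
pose Q := Qp (fun _ => B) d.-1.
pose e (j : texps d tau) := (\sum_(k < d.-1) val (j k) * Q k.+1)%N.
have eK (j : texps d tau) (k : 'I_d.-1) : (e j %/ Q k.+1 %% B)%N = val (j k).
  exact: (@digit_ord (fun _ => B) d.-1 (fun _ => Bpos) (fun k => val (j k)) k (jB j)).
have einj : injective e.
  move=> j1 j2 he; apply/ffunP => k; apply: val_inj; by rewrite -eK he eK.
pose tt (y : R[i]%C) : 'I_d -> R[i]%C := fun k => y ^+ Q k.+1.
pose g := \prod_(k < d.-1) ((x (widd k))%:P - 'X^(Q k.+1)).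
have gE y : g.[y] = \prod_(k < d.-1) (x (widd k) - tt y (widd k)).
  by rewrite /g horner_prod; apply: eq_bigr => k _; rewrite hornerD hornerC hornerN hornerXn.
have g0 : g != 0.
  apply/prodf_neq0 => k _; apply/eqP => h.
  have := congr1 (fun p : {poly R[i]%C} => p`_(Q k.+1)) h.
  rewrite coefB coefC coefXn eqxx coef0 /=.
  have -> : (Q k.+1 == 0%N) = false by apply/negbTE; rewrite -lt0n Qp_gt0.
  by rewrite sub0r => /eqP; rewrite oppr_eq0 oner_eq0.
have tmonoE y (j : texps d tau) : \prod_(k < d.-1) tt y (widd k) ^+ j k = y ^+ e j.
  by rewrite /e -prodrXr; apply: eq_bigr => k _; rewrite /tt -exprM mulnC.
have kdet0 t : kdet (fun i j => peval (Pc i) (dixpoint x t xd j)) *m kv = 0.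
  rewrite /kdet mulmx_suml; apply: big1 => s _.
  rewrite -scalemxAl kron_mul //.
  rewrite (@kroncv0 _ _ _ _ ((s^-1)%g j0)) ?scaler0 //.
  rewrite permKV -[RHS](hP ((s^-1)%g j0)); congr (_ *m _); apply: peval_ext => k.
  rewrite /dixpoint; case: eqP => [hk|_]; first exact: lastcE.
  by rewrite ltn0.
move=> j; apply/matrixP => r c0; rewrite (ord1 c0) [RHS]mxE.
apply: (poly_vanish (c := fun j => W j r ord0) g0 einj) => y gy.
have H := congr1 (fun M => M *m kv) (hA x (tt y) xd); rewrite /= kdet0 in H.
have E2 : (\sum_(i : sexps d tau) \sum_(j : texps d tau) stmono x (tt y) i j *: A i j xd) *m kv
          = \sum_(j : texps d tau) y ^+ e j *: W j.
  rewrite mulmx_suml (eq_bigr (fun i : sexps d tau => \sum_(j : texps d tau) (stmono x (tt y) i j *: A i j xd) *m kv)); last by move=> i _; rewrite mulmx_suml.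
  rewrite exchange_big /=; apply: eq_bigr => j1 _.
  rewrite /W scaler_sumr; apply: eq_bigr => i _.
  rewrite -scalemxAl -scalemxAr scalerA /stmono big_split /= tmonoE mulrC //.
rewrite -scalemxAl E2 in H.
have := congr1 (fun M : 'cV[R[i]%C]_(\prod_(i < d) n i) => M r ord0) H; rewrite !mxE summxE => /eqP.
rewrite -gE mulf_eq0 (negPf gy) /= => /eqP h.
rewrite -[RHS]h; apply: eq_bigr => j1 _; rewrite mxE mulrC //.
Qed.
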